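(* Let $X$ be a finite-dimensional simplicial complex and let $\Sigma$ be a maximal simplex of $\mathcal{N}(X)$. Then there is a vertex $x$ of $X$ with $\Sigma=\Sigma_x$. If moreover, for all vertices $a,b$ of $X$, $\Sigma_a\subseteq\Sigma_b$ implies $a=b$, then for every vertex $y$ of $X$, $\Sigma_y$ is a maximal simplex of $\mathcal{N}(X)$.
   Context: A maximal simplex of a simplicial complex $Y$ is a maximal collection of vertices of $Y$ such that every finite subset is a simplex of $Y$. $\mathcal{N}(X)$ is the nerve of the collection of maximal simplices of $X$: its vertices are the maximal simplices of $X$, and a finite set of them is a simplex iff their common intersection is non-empty. For a vertex $x$ of $X$, $\Sigma_x$ is the collection of maximal simplices of $X$ containing $x$. *)

(* Defs.v *)
From Stdlib Require Import List.
Import ListNotations.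

Definition subset {T : Type} (A B : T -> Prop) : Prop := forall x, A x -> B x.

Definition finite_set {T : Type} (A : T -> Prop) : Prop :=
  exists l : list T, forall x, A x <-> In x l.

Record simplicial_complex (V : Type) := {
  simplex : (V -> Prop) -> Prop;
  simplex_finite : forall s, simplex s -> finite_set s;
  simplex_nonempty : forall s, simplex s -> exists x, s x;
  simplex_down : forall s t, simplex s -> subset t s -> (exists x, t x) -> simplex t;
  simplex_vertex : forall x : V, simplex (fun y => y = x)
}.
Arguments simplex {V} _ _.

Definition finite_dimensional {V : Type} (X : simplicial_complex V) : Prop :=
  exists d : nat, forall s, simplex X s ->
    exists l : list V, length l <= d /\ forall x, s x <-> In x l.

Definition all_finite_subsets_simplices {T : Type} (simp : (T -> Prop) -> Prop)
  (M : T -> Prop) : Prop :=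
  forall s, finite_set s -> (exists x, s x) -> subset s M -> simp s.

Definition maximal_simplex {T : Type} (simp : (T -> Prop) -> Prop) (M : T -> Prop)
  : Prop :=
  (exists x, M x) /\ all_finite_subsets_simplices simp M /\
  forall M', all_finite_subsets_simplices simp M' -> subset M M' -> subset M' M.

(* Vertices of the nerve N(X): the maximal simplices of X. *)
Definition maxsimp {V : Type} (X : simplicial_complex V) : Type :=
  { M : V -> Prop | maximal_simplex (simplex X) M }.

Definition nerve_simplex {V : Type} (X : simplicial_complex V)
  (S : maxsimp X -> Prop) : Prop :=
  finite_set S /\ (exists m, S m) /\ exists x : V, forall m, S m -> proj1_sig m x.

Definition Sigma {V : Type} (X : simplicial_complex V) (x : V) : maxsimp X -> Prop :=
  fun m => proj1_sig m x.

(* Main.v *)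
Require Import Defs.
From Stdlib Require Import List Classical Lia Arith.
Import ListNotations.

Lemma maxsimp_finite (V : Type) (X : simplicial_complex V) (M : V -> Prop) :
  finite_dimensional X -> maximal_simplex (simplex X) M ->
  exists l, forall x, M x <-> In x l.
Proof.
  intros [d Hd] [_ [Hafs _]].
  assert (H : forall n, (exists l, forall x, M x <-> In x l) \/
     exists l, NoDup l /\ length l = n /\ forall x, In x l -> M x).
  { induction n as [|n IH].
    - right; exists []; repeat split; [constructor| simpl; tauto].
    - destruct IH as [H|[l [Hnd [Hlen Hin]]]]; [left; exact H|].
      destruct (classic (forall x, M x -> In x l)) as [H|H].
      + left; exists l; intro x; split; auto.
      + apply not_all_ex_not in H; destruct H as [x Hx].
        apply imply_to_and in Hx; destruct Hx as [Mx Nx].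
        right; exists (x :: l); split; [constructor; auto|split; [simpl; lia|]].
        intros z [<-|Hz]; auto. }
  destruct (H (S d)) as [H1|[l [Hnd [Hlen Hin]]]]; [exact H1|].
  exfalso.
  assert (Hs : simplex X (fun x => In x l)).
  { apply Hafs.
    - exists l; intro; tauto.
    - destruct l as [|a l]; [simpl in Hlen; lia|]. exists a; simpl; auto.
    - intros x Hx; auto. }
  destruct (Hd _ Hs) as [l' [Hl' Hiff]].
  assert (length l <= length l').
  { apply NoDup_incl_length; auto. intros x Hx; apply Hiff; auto. }
  lia.
Qed.

Lemma cover (V : Type) (X : simplicial_complex V) (S : maxsimp X -> Prop) :
  finite_dimensional X ->
  all_finite_subsets_simplices (nerve_simplex X) S -> (exists m, S m) ->
  exists x, forall m, S m -> proj1_sig m x.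
Proof.
  intros Hfd HS [m0 Hm0].
  destruct (maxsimp_finite V X _ Hfd (proj2_sig m0)) as [l0 Hl0].
  assert (Cl : forall l : list V,
    (exists x, In x l /\ forall m, S m -> proj1_sig m x) \/
    exists ms : list (maxsimp X), (forall m, In m ms -> S m) /\
      forall x, In x l -> exists m, In m ms /\ ~ proj1_sig m x).
  { induction l as [|a l IH].
    - right; exists []; split; intros; simpl in *; tauto.
    - destruct IH as [[x [Hx Hs]]|[ms [Hms Hex]]].
      + left; exists x; simpl; auto.
      + destruct (classic (forall m, S m -> proj1_sig m a)) as [H|H].
        * left; exists a; simpl; auto.
        * apply not_all_ex_not in H; destruct H as [m Hm].
          apply imply_to_and in Hm; destruct Hm as [Sm Nm].
          right; exists (m :: ms); split.
          -- intros m' [<-|Hm']; auto.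
          -- intros x [<-|Hx].
             ++ exists m; simpl; auto.
             ++ destruct (Hex x Hx) as [m' [H1 H2]]; exists m'; simpl; auto. }
  destruct (Cl l0) as [[x [_ Hx]]|[ms [Hms Hex]]]; [exists x; exact Hx|].
  destruct (HS (fun m => m0 = m \/ In m ms)) as [_ [_ [x Hx]]].
  - exists (m0 :: ms); intro; simpl; tauto.
  - exists m0; auto.
  - intros m [<-|Hm]; auto.
  - exfalso.
    assert (Hx0 := Hx m0 (or_introl eq_refl)).
    apply Hl0 in Hx0. destruct (Hex x Hx0) as [m [Hm Nm]].
    apply Nm, Hx; auto.
Qed.

Lemma exists_max (V : Type) (X : simplicial_complex V) (y : V) :
  finite_dimensional X -> exists m : maxsimp X, proj1_sig m y.
Proof.
  intros [d Hd].
  set (good := fun l => NoDup l /\ In y l /\ simplex X (fun x => In x l)).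
  assert (Hb : forall l, good l -> length l <= d).
  { intros l [Hnd [_ Hs]]. destruct (Hd _ Hs) as [l' [Hl' Hiff]].
    assert (length l <= length l'); [|lia].
    apply NoDup_incl_length; auto. intros x Hx; apply Hiff; auto. }
  assert (Hk : forall k l, good l -> d - length l <= k ->
    exists l', good l' /\ forall l'', good l'' -> length l'' <= length l').
  { induction k as [|k IH]; intros l Hg Hle.
    - exists l; split; auto. intros l'' Hg''. specialize (Hb _ Hg''). lia.
    - destruct (classic (exists l'', good l'' /\ length l'' > length l))
        as [[l'' [Hg'' Hgt]]|Hn].
      + apply (IH l''); auto. specialize (Hb _ Hg''). lia.
      + exists l; split; auto. intros l'' Hg''.
        destruct (Nat.le_gt_cases (length l'') (length l)); auto.
        exfalso; apply Hn; eauto. }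
  assert (Hy : good [y]).
  { split; [constructor; [simpl; tauto|constructor]|split; [simpl; auto|]].
    apply (simplex_down _ X (fun z => z = y)).
    - apply simplex_vertex.
    - intros x [<-|[]]; reflexivity.
    - exists y; simpl; auto. }
  destruct (Hk d [y] Hy ltac:(lia)) as [l' [[Hnd [Hyl Hs]] Hmax]].
  assert (HM : maximal_simplex (simplex X) (fun x => In x l')).
  { split; [exists y; auto|split].
    - intros s Hfin Hne Hsub. apply (simplex_down _ X (fun x => In x l')); auto.
    - intros M' HM' Hsub x Hx.
      destruct (classic (In x l')) as [H|H]; auto. exfalso.
      assert (Hg : good (x :: l')).
      { split; [constructor; auto|split; [simpl; auto|]].
        apply HM'.
        - exists (x :: l'); intro; tauto.
        - exists x; simpl; auto.
        - intros z [<-|Hz]; auto. }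
      specialize (Hmax _ Hg). simpl in Hmax. lia. }
  exists (exist _ _ HM). simpl. exact Hyl.
Qed.

Theorem lemma3p4 (V : Type) (X : simplicial_complex V) :
  finite_dimensional X ->
  (forall Sg : maxsimp X -> Prop,
     maximal_simplex (nerve_simplex X) Sg ->
     exists x : V, forall m, Sg m <-> Sigma X x m) /\
  ((forall a b : V, subset (Sigma X a) (Sigma X b) -> a = b) ->
   forall y : V, maximal_simplex (nerve_simplex X) (Sigma X y)).
Proof.
  intros Hfd.
  assert (Hafs : forall x, all_finite_subsets_simplices (nerve_simplex X) (Sigma X x)).
  { intros x s Hfin Hne Hsub. split; [auto|split; [auto|exists x; exact Hsub]]. }
  split.
  - intros Sg [Hne [HS Hmax]].
    destruct (cover V X Sg Hfd HS Hne) as [x Hx].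
    exists x; intro m; split; [apply Hx|].
    apply (Hmax (Sigma X x) (Hafs x)). exact Hx.
  - intros Hinj y.
    destruct (exists_max V X y Hfd) as [m0 Hm0].
    split; [exists m0; exact Hm0|split; [apply Hafs|]].
    intros M' HM' Hsub.
    destruct (cover V X M' Hfd HM') as [x Hx].
    + exists m0; apply Hsub; exact Hm0.
    + assert (y = x) by (apply Hinj; intros m Hm; apply Hx, Hsub, Hm).
      subst x. exact Hx.
Qed.
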